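(* Let $A$ be an AUF algebra and let $G$ be a projective generator of $\mathrm{Coh}_{\mathrm L}(A)$. Let $M$ be a left $A$-module. The following are equivalent: (1) $M$ is coherent and is a projective generator of $\mathrm{Coh}_{\mathrm L}(A)$; (2) there exist $n\in\mathbb Z_+$ and a generating idempotent $p$ of $B:=\mathrm{End}_{A,-}(G^{\oplus n})^{\mathrm{op}}$ such that $M\simeq G^{\oplus n}\cdot p$.
   Context: All algebras are associative $\mathbb C$-algebras, not necessarily unital. An idempotent is $e$ with $e^2=e$. An algebra $A$ is AUF if there is a family $(e_i)_{i\in\mathfrak I}$ of mutually orthogonal idempotents with $\dim e_iAe_j<\infty$ and $A=\sum_{i,j}e_iAe_j$. A left $A$-module is quasicoherent if $\xi\in A\xi$ for all $\xi$, coherent if moreover finitely generated; $\mathrm{Coh}_{\mathrm L}(A)$ is the category of coherent left $A$-modules. A projective generator of $\mathrm{Coh}_{\mathrm L}(A)$ is a coherent module, projective as a left $A$-module, such that every coherent left $A$-module is a quotient of a finite direct sum of copies of it. $B=\mathrm{End}_{A,-}(G^{\oplus n})^{\mathrm{op}}$ (a finite-dimensional unital algebra) acts on $G^{\oplus n}$ on the right by $\xi\cdot T=T(\xi)$, and $G^{\oplus n}\cdot p=\{\xi p\}$. Irreducible means nonzero with no nonzero proper submodules; for a finite-dimensional unital algebra $B$, an idempotent $p$ is generating if every irreducible left $B$-module on which $1_B$ acts as identity is a quotient of $Bp$. *)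

(* Defs.v *)
From mathcomp Require Import all_boot all_algebra.
From mathcomp Require Import Rstruct complex.
Set Implicit Arguments. Unset Strict Implicit. Unset Printing Implicit Defensive.
Import GRing.Theory.
Local Open Scope ring_scope.

Definition CC : fieldType := Rdefinitions.R[i].

Section Defs.

Definition is_nualg (A : lmodType CC) (mul : A -> A -> A) : Prop :=
  [/\ forall a b c, mul a (mul b c) = mul (mul a b) c,
      forall (k : CC) x y z, mul (k *: x + y) z = k *: mul x z + mul y z &
      forall (k : CC) x y z, mul z (k *: x + y) = k *: mul z x + mul z y].

Definition is_AUF (A : lmodType CC) (mul : A -> A -> A) : Prop :=
  exists (I : Type) (e : I -> A),
    [/\ forall i, mul (e i) (e i) = e i,
        forall i j, i <> j -> mul (e i) (e j) = 0,
        forall i j, exists (k : nat) (s : 'I_k -> A),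
          forall a, exists c : 'I_k -> CC,
            mul (mul (e i) a) (e j) = \sum_(l < k) c l *: s l &
        forall x, exists s : seq (I * I * A),
          x = \sum_(t <- s) mul (mul (e t.1.1) t.2) (e t.1.2)].

Definition is_lmodule (A : lmodType CC) (mul : A -> A -> A)
    (M : lmodType CC) (act : A -> M -> M) : Prop :=
  [/\ forall a b m, act (mul a b) m = act a (act b m),
      forall (k : CC) a b m, act (k *: a + b) m = k *: act a m + act b m &
      forall (k : CC) a m n, act a (k *: m + n) = k *: act a m + act a n].

Definition is_modmap (A : lmodType CC) (M N : lmodType CC)
    (actM : A -> M -> M) (actN : A -> N -> N) (f : M -> N) : Prop :=
  (forall (k : CC) m n, f (k *: m + n) = k *: f m + f n) /\
  (forall a m, f (actM a m) = actN a (f m)).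

Definition quasicoherent (A : lmodType CC) (M : lmodType CC)
    (act : A -> M -> M) : Prop :=
  forall m, exists a, act a m = m.

Definition fin_gen (A : lmodType CC) (M : lmodType CC)
    (act : A -> M -> M) : Prop :=
  exists (k : nat) (x : 'I_k -> M), forall m,
    exists (c : 'I_k -> CC) (a : 'I_k -> A),
      m = \sum_(l < k) (c l *: x l + act (a l) (x l)).

Definition coherent (A : lmodType CC) (M : lmodType CC)
    (act : A -> M -> M) : Prop :=
  quasicoherent act /\ fin_gen act.

Definition projective_mod (A : lmodType CC) (mul : A -> A -> A)
    (P : lmodType CC) (act : A -> P -> P) : Prop :=
  forall (X Y : lmodType CC) (actX : A -> X -> X) (actY : A -> Y -> Y),
    is_lmodule mul actX -> is_lmodule mul actY ->
    forall f : X -> Y, is_modmap actX actY f -> (forall y, exists x, f x = y) ->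
    forall g : P -> Y, is_modmap act actY g ->
    exists h : P -> X, is_modmap act actX h /\ (forall p, f (h p) = g p).

Definition dsum_act (A : lmodType CC) (G : lmodType CC) (act : A -> G -> G)
    (n : nat) : A -> {ffun 'I_n -> G} -> {ffun 'I_n -> G} :=
  fun a x => [ffun i => act a (x i)].

Definition proj_generator (A : lmodType CC) (mul : A -> A -> A)
    (G : lmodType CC) (act : A -> G -> G) : Prop :=
  [/\ coherent act, projective_mod mul act &
      forall (N : lmodType CC) (actN : A -> N -> N),
        is_lmodule mul actN -> coherent actN ->
        exists (m : nat) (f : {ffun 'I_m -> G} -> N),
          is_modmap (dsum_act act (n:=m)) actN f /\ (forall y, exists x, f x = y)].

(* Elements of B are A-module endomorphisms b of G^{+n}; the product in B is
   b1 *_B b2 = b2 \o b1 (opposite of composition); 1_B = id. *)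
Definition is_End (A : lmodType CC) (G : lmodType CC) (act : A -> G -> G)
    (n : nat) (b : {ffun 'I_n -> G} -> {ffun 'I_n -> G}) : Prop :=
  is_modmap (dsum_act act (n:=n)) (dsum_act act (n:=n)) b.

Definition is_Bmodule (A : lmodType CC) (G : lmodType CC) (act : A -> G -> G)
    (n : nat) (V : lmodType CC)
    (bact : ({ffun 'I_n -> G} -> {ffun 'I_n -> G}) -> V -> V) : Prop :=
  [/\ forall b, is_End act b ->
        forall (k : CC) v w, bact b (k *: v + w) = k *: bact b v + bact b w,
      forall b1 b2, is_End act b1 -> is_End act b2 -> forall (k : CC) v,
        bact (fun x => k *: b1 x + b2 x) v = k *: bact b1 v + bact b2 v,
      (* (b1 *_B b2) . v = b1 . (b2 . v), with b1 *_B b2 = b2 \o b1 *)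
      forall b1 b2, is_End act b1 -> is_End act b2 -> forall v,
        bact (fun x => b2 (b1 x)) v = bact b1 (bact b2 v) &
      forall v, bact id v = v].

Definition Bsubmodule (A : lmodType CC) (G : lmodType CC) (act : A -> G -> G)
    (n : nat) (V : lmodType CC)
    (bact : ({ffun 'I_n -> G} -> {ffun 'I_n -> G}) -> V -> V)
    (S : V -> Prop) : Prop :=
  [/\ S 0, forall (k : CC) v w, S v -> S w -> S (k *: v + w) &
      forall b v, is_End act b -> S v -> S (bact b v)].

Definition Birreducible (A : lmodType CC) (G : lmodType CC) (act : A -> G -> G)
    (n : nat) (V : lmodType CC)
    (bact : ({ffun 'I_n -> G} -> {ffun 'I_n -> G}) -> V -> V) : Prop :=
  (exists v : V, v <> 0) /\
  forall S : V -> Prop, Bsubmodule act bact S ->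
    (exists v, S v /\ v <> 0) -> forall v, S v.

(* the left ideal B p = { b *_B p } = { p \o b : b in B } *)
Definition in_Bp (A : lmodType CC) (G : lmodType CC) (act : A -> G -> G)
    (n : nat) (p x : {ffun 'I_n -> G} -> {ffun 'I_n -> G}) : Prop :=
  exists b, is_End act b /\ forall y, x y = p (b y).

(* V is a quotient of the left B-module Bp: there is a surjective
   B-module homomorphism phi : Bp -> V (action of b on x in Bp is
   b *_B x = x \o b). *)
Definition Bquotient_of_Bp (A : lmodType CC) (G : lmodType CC)
    (act : A -> G -> G) (n : nat) (p : {ffun 'I_n -> G} -> {ffun 'I_n -> G})
    (V : lmodType CC)
    (bact : ({ffun 'I_n -> G} -> {ffun 'I_n -> G}) -> V -> V) : Prop :=
  exists phi : ({ffun 'I_n -> G} -> {ffun 'I_n -> G}) -> V,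
    [/\ forall x y (k : CC), in_Bp act p x -> in_Bp act p y ->
          phi (fun z => k *: x z + y z) = k *: phi x + phi y,
        forall x b, in_Bp act p x -> is_End act b ->
          phi (fun z => x (b z)) = bact b (phi x) &
        forall v, exists x, in_Bp act p x /\ phi x = v].

Definition generating_idempotent (A : lmodType CC) (G : lmodType CC)
    (act : A -> G -> G) (n : nat)
    (p : {ffun 'I_n -> G} -> {ffun 'I_n -> G}) : Prop :=
  [/\ is_End act p, forall x, p (p x) = p x &
      forall (V : lmodType CC)
             (bact : ({ffun 'I_n -> G} -> {ffun 'I_n -> G}) -> V -> V),
        is_Bmodule act bact -> Birreducible act bact ->
        Bquotient_of_Bp act p bact].

End Defs.
Arguments dsum_act {A G} act n.

(* Main.v *)
Require Import Defs.
From HB Require Import structures.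
From mathcomp Require Import all_boot all_algebra.
From mathcomp Require Import Rstruct complex.
From mathcomp Require Import boolp classical_sets functions.
Set Implicit Arguments. Unset Strict Implicit. Unset Printing Implicit Defensive.
Import GRing.Theory.
Local Open Scope ring_scope.


Section SubSp.
Variables (V0 : lmodType CC) (P : V0 -> Prop).
Definition subsp := P 0 /\ forall (k : CC) x y, P x -> P y -> P (k *: x + y).
Hypothesis hP : subsp.
Lemma ssD x y : P x -> P y -> P (x + y).
Proof. by case: hP => _ Pl ? ?; rewrite -[x]scale1r; apply: Pl. Qed.
Lemma ssZ k x : P x -> P (k *: x).
Proof. by case: hP => _ Pl ?; rewrite -[_ *: _]addr0; apply: Pl => //; case: hP. Qed.
Lemma ssN x : P x -> P (- x).
Proof. by move=> ?; rewrite -scaleN1r; apply: ssZ. Qed.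
Lemma ssB x y : P x -> P y -> P (x - y).
Proof. by move=> ? ?; apply: ssD => //; apply: ssN. Qed.
Lemma ss0 : P 0. Proof. by case: hP. Qed.
Lemma ss_sum I r (Q : pred I) F : (forall i, Q i -> P (F i)) -> P (\sum_(i <- r | Q i) F i).
Proof. by move=> h; elim/big_rec: _ => [|i x Qi Px]; [exact: ss0| apply: ssD => //; exact: h]. Qed.
End SubSp.


Section Quot.
Variables (V0 : lmodType CC) (S L : V0 -> Prop).
Record qhyp : Prop := QHyp {
  qS0 : S 0; qSl : forall (k : CC) x y, S x -> S y -> S (k *: x + y);
  qL0 : L 0; qLl : forall (k : CC) x y, L x -> L y -> L (k *: x + y);
  qLS : forall x, L x -> S x }.
Variable H : qhyp.
Definition cls (x : V0) : V0 -> Prop := fun y => L (y - x).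
Definition Q (_ : qhyp) := {T : V0 -> Prop | exists x, S x /\ T = cls x}.
HB.instance Definition _ := gen_eqMixin (Q H).
HB.instance Definition _ := gen_choiceMixin (Q H).

Let Lsub : subsp L. Proof. by split; [exact: qL0| exact: qLl]. Qed.
Let Ssub : subsp S. Proof. by split; [exact: qS0| exact: qSl]. Qed.
Let LD := ssD Lsub.
Let LN := ssN Lsub.
Let LB := ssB Lsub.
Let SD := ssD Ssub.
Let SN := ssN Ssub.
Let SZ := ssZ Ssub.

Lemma cls_eq x y : cls x = cls y <-> L (x - y).
Proof.
split=> [E|Lxy].
  have : cls x x by rewrite /cls subrr; exact: qL0.
  by rewrite E.
apply/funext => z; apply/propext; rewrite /cls; split=> h.
  by have := LD h Lxy; rewrite addrA subrK.
by have := LB h Lxy; rewrite opprB addrA subrK.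
Qed.

Definition qpi (x : V0) : Q H :=
  match pselect (S x) with
  | left h => exist _ (cls x) (ex_intro _ x (conj h erefl))
  | right _ => exist _ (cls 0) (ex_intro _ 0 (conj (qS0 H) erefl))
  end.

Lemma piE x : S x -> proj1_sig (qpi x) = cls x.
Proof. by rewrite /qpi; case: pselect. Qed.

Lemma pi_eq x y : S x -> S y -> (qpi x = qpi y <-> L (x - y)).
Proof.
move=> Sx Sy; split=> [E|Lxy].
  by apply/cls_eq; rewrite -piE // -[RHS]piE // E.
move: (piE Sx) (piE Sy); case: (qpi x) => [a pa]; case: (qpi y) => [b pb] /= Ea Eb.
by apply: eq_exist; rewrite Ea Eb; apply/cls_eq.
Qed.

Lemma pi_surj u : exists x, S x /\ qpi x = u.
Proof.
case: u => T pT; case: (pT) => [x [Sx ET]]; exists x; split => //.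
by move: (piE Sx); case: (qpi x) => [a pa] /= E; apply: eq_exist; rewrite E ET.
Qed.

Definition qrep u := projT1 (cid (pi_surj u)).
Lemma repS u : S (qrep u). Proof. by rewrite /qrep; case: cid => x []. Qed.
Lemma repK u : qpi (qrep u) = u. Proof. by rewrite /qrep; case: cid => x []. Qed.
Lemma pi_rep x : S x -> L (qrep (qpi x) - x).
Proof. by move=> Sx; apply/(pi_eq (repS _) Sx); rewrite repK. Qed.

Definition qzero := qpi 0.
Definition qadd u v := qpi (qrep u + qrep v).
Definition qopp u := qpi (- qrep u).
Definition qscale (k : CC) u := qpi (k *: qrep u).

Lemma piD x y : S x -> S y -> qadd (qpi x) (qpi y) = qpi (x + y).
Proof.
move=> Sx Sy; apply/pi_eq; [apply: SD; exact: repS| exact: SD|].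
have := LD (pi_rep Sx) (pi_rep Sy).
by congr L; rewrite opprD !addrA; congr (_ - _); rewrite -!addrA; congr (_ + _); rewrite addrC.
Qed.
Lemma piN x : S x -> qopp (qpi x) = qpi (- x).
Proof.
move=> Sx; apply/pi_eq; [apply: SN; exact: repS| exact: SN|].
by have := LN (pi_rep Sx); rewrite opprB opprK addrC.
Qed.
Lemma piZ k x : S x -> qscale k (qpi x) = qpi (k *: x).
Proof.
move=> Sx; apply/pi_eq; [apply: SZ; exact: repS| exact: SZ|].
by have := ssZ Lsub k (pi_rep Sx); rewrite scalerBr.
Qed.

Lemma qsurj (u : Q H) : exists x, S x /\ u = qpi x.
Proof. by exists (qrep u); split; [exact: repS| rewrite repK]. Qed.

Lemma qaddA : associative qadd.
Proof.
move=> u v w; case: (qsurj u) => [a [Sa ->]]; case: (qsurj v) => [b [Sb ->]].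
case: (qsurj w) => [c [Sc ->]].
by rewrite !piD ?addrA //; apply: SD.
Qed.
Lemma qaddC : commutative qadd.
Proof.
move=> u v; case: (qsurj u) => [a [Sa ->]]; case: (qsurj v) => [b [Sb ->]].
by rewrite !piD // addrC.
Qed.
Lemma qadd0 : left_id qzero qadd.
Proof.
move=> u; case: (qsurj u) => [a [Sa ->]].
by rewrite /qzero piD ?add0r //; exact: qS0.
Qed.
Lemma qaddN : left_inverse qzero qopp qadd.
Proof.
move=> u; case: (qsurj u) => [a [Sa ->]].
by rewrite piN // piD ?addNr //; exact: SN.
Qed.

HB.instance Definition _ := GRing.isZmodule.Build (Q H) qaddA qaddC qadd0 qaddN.

Lemma qscaleA a b v : qscale a (qscale b v) = qscale (a * b) v.
Proof. by case: (qsurj v) => [x [Sx ->]]; rewrite !piZ ?scalerA //; exact: SZ. Qed.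
Lemma qscale1 : left_id 1 qscale.
Proof. by move=> v; case: (qsurj v) => [x [Sx ->]]; rewrite !piZ ?scale1r. Qed.
Lemma qscaleDr : right_distributive qscale +%R.
Proof.
move=> k u v; case: (qsurj u) => [a [Sa ->]]; case: (qsurj v) => [b [Sb ->]].
rewrite /GRing.add /= piD // !piZ ?piD ?scalerDr //; by do ?[apply: SD | apply: SZ].
Qed.
Lemma qscaleDl v : {morph qscale^~ v: a b / a + b}.
Proof.
move=> a b; case: (qsurj v) => [x [Sx ->]].
by rewrite /GRing.add /= !piZ ?piD ?scalerDl //; apply: SZ.
Qed.

HB.instance Definition _ := GRing.Zmodule_isLmodule.Build CC (Q H) qscaleA qscale1 qscaleDr qscaleDl.

Lemma pi_lin (k : CC) x y : S x -> S y -> qpi (k *: x + y) = k *: qpi x + qpi y.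
Proof.
move=> Sx Sy; rewrite /GRing.add /= /GRing.scale /=.
by rewrite piZ // piD //; exact: SZ.
Qed.
Lemma pi0 : qpi 0 = 0. Proof. by []. Qed.
Lemma pi_eq0 x : S x -> (qpi x = 0 <-> L x).
Proof. by move=> Sx; rewrite -pi0 pi_eq ?subr0 //; exact: qS0. Qed.
End Quot.


Definition islin (U W : lmodType CC) (f : U -> W) :=
  forall (k : CC) x y, f (k *: x + y) = k *: f x + f y.

Section Lin.
Variables (U W : lmodType CC) (f : U -> W) (hf : islin f).
Lemma lin0 : f 0 = 0.
Proof.
have := hf 1 0 0; rewrite !scale1r addr0.
by move/(congr1 (fun z => z - f 0)); rewrite subrr addrK => ->.
Qed.
Lemma linD x y : f (x + y) = f x + f y.
Proof. by have := hf 1 x y; rewrite !scale1r. Qed.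
Lemma linZ k x : f (k *: x) = k *: f x.
Proof. by have := hf k x 0; rewrite !addr0 lin0 addr0. Qed.
Lemma linN x : f (- x) = - f x.
Proof. by rewrite -scaleN1r linZ scaleN1r. Qed.
Lemma linB x y : f (x - y) = f x - f y.
Proof. by rewrite linD linN. Qed.
Lemma lin_sum I r (P : pred I) (F : I -> U) :
  f (\sum_(i <- r | P i) F i) = \sum_(i <- r | P i) f (F i).
Proof. exact: (big_morph f linD lin0). Qed.
End Lin.

Definition onto (X Y : Type) (f : X -> Y) := forall y, exists x, f x = y.

Section Mod.
Variables (A : lmodType CC) (mul : A -> A -> A).

Lemma mm_lin (X Y : lmodType CC) (aX : A -> X -> X) (aY : A -> Y -> Y) f :
  is_modmap aX aY f -> islin f.
Proof. by case. Qed.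

Lemma act_lin (X : lmodType CC) (aX : A -> X -> X) a :
  is_lmodule mul aX -> islin (aX a).
Proof. by case=> _ _ h k x y; rewrite h. Qed.

Lemma act_linA (X : lmodType CC) (aX : A -> X -> X) x :
  is_lmodule mul aX -> islin (aX ^~ x).
Proof. by case=> _ h _ k a b; rewrite h. Qed.

Lemma mm_comp (X Y Z : lmodType CC) (aX : A -> X -> X) (aY : A -> Y -> Y)
  (aZ : A -> Z -> Z) f g :
  is_modmap aX aY f -> is_modmap aY aZ g -> is_modmap aX aZ (fun x => g (f x)).
Proof.
move=> [f1 f2] [g1 g2]; split=> [k x y|a x]; first by rewrite f1 g1.
by rewrite f2 g2.
Qed.

Lemma mm_id (X : lmodType CC) (aX : A -> X -> X) : is_modmap aX aX id.
Proof. by []. Qed.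

Section Pow.
Variables (G : lmodType CC) (act : A -> G -> G) (HG : is_lmodule mul act).

Lemma dsum_lmod n : is_lmodule mul (dsum_act act n).
Proof.
case: HG => h1 h2 h3; split.
- by move=> a b x; apply/ffunP => i; rewrite !ffunE h1.
- by move=> k a b x; apply/ffunP => i; rewrite !ffunE h2.
- by move=> k a x y; apply/ffunP => i; rewrite !ffunE h3.
Qed.

Definition dinj n (i : 'I_n) (y : G) : {ffun 'I_n -> G} :=
  [ffun j => if j == i then y else 0].

Lemma dinj_mm n i : is_modmap act (dsum_act act n) (@dinj n i).
Proof.
split=> [k x y|a x]; apply/ffunP => j; rewrite !ffunE.
  by case: eqP; rewrite ?scaler0 ?addr0.
by case: eqP => // _; rewrite (lin0 (act_lin a HG)).
Qed.

Lemma proj_mm n i : is_modmap (dsum_act act n) act (fun x : {ffun 'I_n -> G} => x i).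
Proof. by split=> [k x y|a x]; rewrite !ffunE. Qed.

Lemma sum_dinj n (x : {ffun 'I_n -> G}) : \sum_i dinj i (x i) = x.
Proof.
apply/ffunP => j; rewrite sum_ffunE (bigD1 j) //= big1 ?addr0.
  by rewrite ffunE eqxx.
by move=> i /negbTE ij; rewrite ffunE eq_sym ij.
Qed.

Lemma proj_pow n : projective_mod mul act -> projective_mod mul (dsum_act act n).
Proof.
move=> PG X Y aX aY HX HY f Hf fs g Hg.
have : forall i : 'I_n, exists h, is_modmap act aX h /\
    forall y, f (h y) = g (dinj i y).
  move=> i; apply: (PG X Y aX aY HX HY f Hf fs).
  exact: (mm_comp (dinj_mm i) Hg).
case/choice => hh Hh.
exists (fun x : {ffun 'I_n -> G} => \sum_i hh i (x i)); split; first split.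
- move=> k x y.
  rewrite scaler_sumr -big_split /=; apply: eq_bigr => i _.
  by rewrite !ffunE; case: (Hh i) => [[h1 _] _]; rewrite h1.
- move=> a x; rewrite (lin_sum (act_lin a HX)); apply: eq_bigr => i _.
  by rewrite ffunE; case: (Hh i) => [[_ h2] _]; rewrite h2.
- move=> x; rewrite (lin_sum (mm_lin Hf)).
  rewrite -{2}(sum_dinj x) (lin_sum (mm_lin Hg)); apply: eq_bigr => i _.
  by case: (Hh i) => _ ->.
Qed.

End Pow.
End Mod.


Section Mod2.
Variables (A : lmodType CC) (mul : A -> A -> A).

Lemma proj_retract (P M : lmodType CC) (aP : A -> P -> P) (aM : A -> M -> M) s r :
  projective_mod mul aP -> is_modmap aM aP s -> is_modmap aP aM r ->
  (forall m, r (s m) = m) -> projective_mod mul aM.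
Proof.
move=> PP Hs Hr rs X Y aX aY HX HY f Hf fs g Hg.
have [h [Hh fh]] := PP X Y aX aY HX HY f Hf fs _ (mm_comp Hr Hg).
exists (fun m => h (s m)); split; first exact: mm_comp Hs Hh.
by move=> m; rewrite fh rs.
Qed.

Lemma quasi_image (X Y : lmodType CC) (aX : A -> X -> X) (aY : A -> Y -> Y) f :
  quasicoherent aX -> is_modmap aX aY f -> onto f -> quasicoherent aY.
Proof.
move=> QX [_ Hf] fs y; have [x <-] := fs y; have [a Ha] := QX x.
by exists a; rewrite -Hf Ha.
Qed.

Lemma fin_gen_image (X Y : lmodType CC) (aX : A -> X -> X) (aY : A -> Y -> Y) f :
  fin_gen aX -> is_modmap aX aY f -> onto f -> fin_gen aY.
Proof.
move=> [k [x Hx]] Hf fs; exists k, (fun l => f (x l)) => y.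
have [z <-] := fs y; have [c [a ->]] := Hx z; exists c, a.
rewrite (lin_sum (mm_lin Hf)); apply: eq_bigr => l _.
have [h1 h2] := Hf; rewrite (linD (mm_lin Hf)) (linZ (mm_lin Hf)) h2 //.
Qed.

Lemma fin_gen_fin (M : lmodType CC) (aM : A -> M -> M) (T : finType) (x : T -> M) :
  (forall m, exists (c : T -> CC) (a : T -> A),
      m = \sum_(t : T) (c t *: x t + aM (a t) (x t))) -> fin_gen aM.
Proof.
move=> Hx; exists #|T|, (fun l => x (enum_val l)) => m.
have [c [a ->]] := Hx m; exists (fun l => c (enum_val l)), (fun l => a (enum_val l)).
rewrite -(big_enum_val (A := T) (fun t => c t *: x t + aM (a t) (x t))).
by apply: eq_bigl => t; rewrite inE.
Qed.

Section Pow2.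
Variables (G : lmodType CC) (act : A -> G -> G) (HG : is_lmodule mul act).

Lemma fin_gen_pow n : fin_gen act -> fin_gen (dsum_act act n).
Proof.
move=> [k [x Hx]].
apply: (fin_gen_fin (T := ('I_n * 'I_k)%type) (x := fun t => dinj t.1 (x t.2))) => y.
have : forall i : 'I_n, exists ca : ('I_k -> CC) * ('I_k -> A),
    y i = \sum_(l < k) (ca.1 l *: x l + act (ca.2 l) (x l)).
  by move=> i; have [c [a E]] := Hx (y i); exists (c, a).
case/choice => ca Hca.
exists (fun t => (ca t.1).1 t.2), (fun t => (ca t.1).2 t.2).
rewrite -(pair_big xpredT xpredT (fun i l => (ca i).1 l *: dinj i (x l) +
   dsum_act act n ((ca i).2 l) (dinj i (x l)))) /=.
rewrite -{1}(sum_dinj y); apply: eq_bigr => i _.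
rewrite Hca (lin_sum (mm_lin (dinj_mm HG i))); apply: eq_bigr => l _.
have [h1 h2] := dinj_mm HG (n := n) i.
by rewrite (linD (mm_lin (dinj_mm HG i))) (linZ (mm_lin (dinj_mm HG i))) h2.
Qed.

End Pow2.
End Mod2.


Section QuotPow.
Variables (A : lmodType CC).

Lemma quot_pow (M Q : lmodType CC) (aM : A -> M -> M) (aQ : A -> Q -> Q) a
    (g : {ffun 'I_a -> M} -> Q) :
  is_modmap (dsum_act aM a) aQ g -> onto g -> forall b, exists c
    (h : {ffun 'I_c -> M} -> {ffun 'I_b -> Q}),
    is_modmap (dsum_act aM c) (dsum_act aQ b) h /\ onto h.
Proof.
move=> Hg gs b.
exists #|{: 'I_b * 'I_a}|, (fun u => [ffun i => g [ffun j => u (enum_rank ((i, j) : 'I_b * 'I_a))]]).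
have [g1 g2] := Hg; split; first split.
- move=> k u v; apply/ffunP => i; rewrite !ffunE -g1; congr g.
  by apply/ffunP => j; rewrite !ffunE.
- move=> x u; apply/ffunP => i; rewrite !ffunE -g2; congr g.
  by apply/ffunP => j; rewrite !ffunE.
- move=> y; have [xs Hxs] := choice (fun i => gs (y i)).
  exists [ffun t => xs (enum_val t).1 (enum_val t).2].
  apply/ffunP => i; rewrite ffunE -Hxs; congr g.
  by apply/ffunP => j; rewrite !ffunE enum_rankK.
Qed.

Lemma onto_comp (X Y Z : Type) (f : X -> Y) (g : Y -> Z) :
  onto f -> onto g -> onto (fun x => g (f x)).
Proof. by move=> fs gs z; have [y <-] := gs z; have [x <-] := fs y; exists x. Qed.

End QuotPow.

Section AUF.
Variables (A : lmodType CC) (mul : A -> A -> A) (HA : is_nualg mul) (HAUF : is_AUF mul).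

Let mulA a b c : mul a (mul b c) = mul (mul a b) c.
Proof. by case: HA. Qed.
Let linl z : islin (fun x => mul x z).
Proof. by case: HA => _ h _ k x y; rewrite h. Qed.
Let linr z : islin (mul z).
Proof. by case: HA => _ _ h k x y; rewrite h. Qed.

Lemma auf_units : forall k (a : 'I_k -> A), exists f, forall j, mul f (a j) = a j.
Proof.
case: HAUF => I [e [eid eorth _ espan]].
have ecomm i j : mul (e i) (e j) = mul (e j) (e i).
  by case: (pselect (i = j)) => [->//|ij]; rewrite !eorth //; move=> ji; apply: ij.
pose comm f := forall j, mul f (e j) = mul (e j) f.
have add_idx f i : comm f -> exists f', [/\ comm f',
    (forall x, mul f x = x -> mul f' x = x) & mul f' (e i) = e i].
  move=> cf; exists (f + e i - mul f (e i)); split.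
  - move=> j; rewrite (linB (linl _)) (linD (linl _)) (linB (linr _)) (linD (linr _)).
    rewrite cf ecomm; congr (_ - _).
    by rewrite mulA -cf -mulA ecomm mulA.
  - move=> x fx; rewrite (linB (linl _)) (linD (linl _)) fx cf -mulA fx.
    by rewrite addrK.
  - by rewrite (linB (linl _)) (linD (linl _)) eid -mulA eid addrAC subrr add0r.
have cover (l : seq I) f0 : comm f0 -> exists f, [/\ comm f,
    (forall x, mul f0 x = x -> mul f x = x) & forall i, List.In i l -> mul f (e i) = e i].
  elim: l f0 => [|i l IH] f0 cf0; first by exists f0.
  have [f1 [cf1 p1 e1]] := add_idx f0 i cf0.
  have [f [cf p e2]] := IH f1 cf1.
  exists f; split => // [x /p1/p //|j [<-|jl]]; [exact: p| exact: e2].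
have fixsum f (s : seq (I * I * A)) : (forall t, List.In t s -> mul f (e t.1.1) = e t.1.1) ->
    mul f (\sum_(t <- s) mul (mul (e t.1.1) t.2) (e t.1.2)) =
    \sum_(t <- s) mul (mul (e t.1.1) t.2) (e t.1.2).
  elim: s => [|t s IH] h; first by rewrite big_nil (lin0 (linr _)).
  rewrite !big_cons (linD (linr _)) IH; last by move=> u us; apply: h; right.
  by rewrite !mulA h //; left.
have main k : forall a : 'I_k -> A, exists f, comm f /\ forall j, mul f (a j) = a j.
  elim: k => [|k IH] a; first by exists 0; split => [j|[]//]; rewrite (lin0 (linl _)) (lin0 (linr _)).
  have [f0 [cf0 h0]] := IH (fun j => a (lift ord0 j)).
  have [s Es] := espan (a ord0).
  have [f [cf p e2]] := cover [seq t.1.1 | t <- s] f0 cf0.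
  exists f; split => // j; case: (unliftP ord0 j) => [j' ->|->].
    exact: p.
  rewrite Es fixsum // => t ts; apply: e2.
  by elim: (s) ts => //= u s0 IHs [->|/IHs]; [left|right].
by move=> k a; have [f [_ h]] := main k a; exists f.
Qed.

Lemma quasi_pow (G : lmodType CC) (act : A -> G -> G) n :
  is_lmodule mul act -> quasicoherent act -> quasicoherent (dsum_act act n).
Proof.
move=> HG QG x; have [as_ Has] := choice (fun i => QG (x i)).
have [f hf] := auf_units as_; exists f; apply/ffunP => i; rewrite ffunE.
by case: HG => h1 _ _; rewrite -{1}Has -h1 hf Has.
Qed.
End AUF.


Lemma lin_lc (U W : lmodType CC) (f g : U -> W) (k : CC) :
  islin f -> islin g -> islin (fun x => k *: f x + g x).
Proof.
move=> hf hg k' x y; rewrite hf hg !scalerDr !scalerA [k * _]mulrC.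
by rewrite addrACA.
Qed.

Section EndB.
Variables (A : lmodType CC) (mul : A -> A -> A) (G : lmodType CC)
  (act : A -> G -> G) (HG : is_lmodule mul act) (n : nat).
Local Notation P := {ffun 'I_n -> G}.
Local Notation F := (P -> P).
Local Notation End := (is_End act (n := n)).

Lemma End_lin b : End b -> islin b.
Proof. by case. Qed.
Lemma End_id : End id.
Proof. by []. Qed.
Lemma End_comp b c : End b -> End c -> End (fun z => c (b z)).
Proof. exact: mm_comp. Qed.
Lemma End_lc (k : CC) b c : End b -> End c -> End (k *: b + c).
Proof.
move=> Hb Hc; split; first exact: lin_lc (End_lin Hb) (End_lin Hc).
move=> a x; change (k *: b (dsum_act act n a x) + c (dsum_act act n a x) = dsum_act act n a (k *: b x + c x)); case: Hb => _ ->; case: Hc => _ ->.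
by rewrite (act_lin a (dsum_lmod HG n)).
Qed.
Lemma End0 : End (0 : F).
Proof.
split=> [k x y|a x] /=; first by rewrite scaler0 addr0.
by rewrite (lin0 (act_lin a (dsum_lmod HG n))).
Qed.
Lemma End_sub : subsp End.
Proof. by split; [exact: End0| move=> k x y; exact: End_lc]. Qed.

Variable p : F.
Hypothesis Hp : generating_idempotent act p.

Definition J (x : F) := exists k (X Y : 'I_k -> F),
  (forall j, End (X j) /\ End (Y j)) /\ x = (fun z => \sum_(j < k) X j (p (Y j z))).

Let pE : End p. Proof. by case: Hp. Qed.
Let pp x : p (p x) = p x. Proof. by case: Hp. Qed.

Lemma J_End x : J x -> End x.
Proof.
move=> [k [X [Y [HXY ->]]]].
have -> : (fun z => \sum_(j < k) X j (p (Y j z))) = \sum_(j < k) (fun z => X j (p (Y j z))).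
  by rewrite fct_sumE.
apply: (ss_sum End_sub) => j _; case: (HXY j) => HX HY.
by apply: End_comp HX; apply: End_comp pE.
Qed.

Lemma J0 : J 0.
Proof.
exists 0%N, (fun _ => 0), (fun _ => 0); split => [[]//|].
by apply/funext => z; rewrite big_ord0.
Qed.

Lemma Jl (k : CC) x y : J x -> J y -> J (k *: x + y).
Proof.
move=> [k1 [X1 [Y1 [H1 ->]]]] [k2 [X2 [Y2 [H2 ->]]]].
exists (k1 + k2)%N,
  (fun j => match fintype.split j with inl j1 => k *: X1 j1 | inr j2 => X2 j2 end),
  (fun j => match fintype.split j with inl j1 => Y1 j1 | inr j2 => Y2 j2 end); split.
  move=> j; case: (fintype.split j) => [j1|j2]; last exact: H2.
  by case: (H1 j1) => ? ?; split => //; rewrite -[_ *: _]addr0; apply: End_lc => //; exact: End0.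
have E (f g : F) (c : CC) (w : P) : (c *: f + g) w = c *: f w + g w by []. apply/funext => z; rewrite big_split_ord /= E scaler_sumr; congr (_ + _).
  by apply: eq_bigr => j _; rewrite (unsplitK (inl _ j)).
by apply: eq_bigr => j _; rewrite (unsplitK (inr _ j)).
Qed.

Lemma Jc x c : J x -> End c -> J (fun z => x (c z)).
Proof.
move=> [k [X [Y [HXY ->]]]] Hc; exists k, X, (fun j z => Y j (c z)); split => //.
by move=> j; case: (HXY j) => ? ?; split => //; exact: End_comp.
Qed.

Lemma Jp y : End y -> J (fun z => y (p z)).
Proof.
move=> Hy; exists 1%N, (fun _ => y), (fun _ => id); split => //.
by apply/funext => z; rewrite big_ord1.
Qed.

End EndB.


Section Key.
Local Open Scope classical_set_scope.
Variables (A : lmodType CC) (mul : A -> A -> A) (G : lmodType CC)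
  (act : A -> G -> G) (HG : is_lmodule mul act) (n : nat).
Local Notation P := {ffun 'I_n -> G}.
Local Notation F := (P -> P).
Local Notation End := (is_End act (n := n)).
Variable p : F.
Hypothesis Hp : generating_idempotent act p.
Local Notation J := (J act p).

Definition LI (X : set F) := [/\ forall x, X x -> End x,
  forall (k : CC) x y, X x -> X y -> X (k *: x + y) &
  forall x c, X x -> End c -> X (fun z => x (c z))].

Definition Pz (X : set F) := [/\ LI X, ~ X id & (X = set0 \/ J `<=` X)].

Lemma key : J id.
Proof.
have [//|nJ] := pselect (J id); exfalso.
have chain : forall Fam : set (set F), Fam `<=` Pz -> total_on Fam subset ->
    Pz (\bigcup_(X in Fam) X).
  move=> Fam FamP Ftot; split.
  - split.
    + by move=> x [X FX Xx]; have [[h _ _] _ _] := FamP X FX; exact: h.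
    + move=> k x y [X1 F1 x1] [X2 F2 y2].
      case: (Ftot X1 X2 F1 F2) => sub.
        exists X2 => //; have [[_ h _] _ _] := FamP X2 F2; apply: h => //; exact: sub.
      exists X1 => //; have [[_ h _] _ _] := FamP X1 F1; apply: h => //; exact: sub.
    + move=> x c [X FX Xx] Hc; exists X => //.
      by have [[_ _ h] _ _] := FamP X FX; exact: h.
  - by move=> [X FX Xid]; have [_ h _] := FamP X FX; exact: h.
  - case: (pselect (exists2 X, Fam X & J `<=` X)) => [[X FX JX]|nX].
      by right => x Jx; exists X => //; exact: JX.
    left; apply/funext => x; apply/propext; split; last by case.
    move=> [X FX Xx]; have [_ _ [X0|JX]] := FamP X FX; first by rewrite X0 in Xx.
    by exfalso; apply: nX; exists X.
have [A0 [PA0 maxA0]] := Zorn_bigcup chain.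
have LIJ : LI J.
  split; [exact: (J_End HG Hp)| exact: (Jl HG)| exact: Jc].
have PJ : Pz J by split => //; right.
have JA0 : J `<=` A0.
  case: PA0 => _ _ [A00|//]; exfalso; apply: (maxA0 J) => //.
  by rewrite A00; split => // /(_ 0 (J0 act p)).
case: PA0 => [[A0E A0l A0c] A0id _].
have pE : End p by case: Hp.
have Eid : End id := @End_id _ _ act n.
have pp x : p (p x) = p x by case: Hp.
have HQ : qhyp End A0.
  split; [exact: (End0 HG)| move=> k x y; exact: (End_lc HG) | exact: JA0 (J0 act p)
         | exact: A0l | exact: A0E].
pose bact (b : F) (v : Q HQ) : Q HQ := qpi HQ (fun z => qrep v (b z)).
have bact_pi b x : End b -> End x -> bact b (qpi HQ x) = qpi HQ (fun z => x (b z)).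
  move=> Hb Hx; apply/(pi_eq HQ (End_comp Hb (repS _)) (End_comp Hb Hx)).
  exact: (A0c _ _ (pi_rep HQ Hx) Hb).
have maxl b : End b -> ~ A0 b -> exists a c, [/\ A0 a, End c & id = a + (fun z => b (c z))].
  move=> Hb nb.
  pose B' := fun x => exists a c, [/\ A0 a, End c & x = a + (fun z => b (c z))].
  have A0B' : A0 `<=` B'.
    move=> x Ax; exists x, 0; split => //; first exact: (End0 HG).
    apply/funext => z; change (x z = x z + b 0); by rewrite (lin0 (End_lin Hb)) addr0.
  have LIB : LI B'.
    split.
    - move=> x [a [c [Aa Hc ->]]].
      have := End_lc HG 1 (A0E _ Aa) (End_comp Hc Hb); by rewrite scale1r.
    - move=> k x y [a1 [c1 [A1 H1 ->]]] [a2 [c2 [A2 H2 ->]]].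
      exists (k *: a1 + a2), (k *: c1 + c2); split; [exact: A0l| exact: (End_lc HG)|].
      apply/funext => z.
      change (k *: (a1 z + b (c1 z)) + (a2 z + b (c2 z)) =
              (k *: a1 z + a2 z) + b (k *: c1 z + c2 z)).
      by rewrite (End_lin Hb) scalerDr addrACA.
    - move=> x d [a [c [Aa Hc ->]]] Hd.
      exists (fun z => a (d z)), (fun z => c (d z)); split => //; [exact: A0c| exact: End_comp].
  have JB : J `<=` B' := fun x Jx => A0B' x (JA0 x Jx).
  case: (pselect (B' id)) => [//|nB].
  exfalso; apply: (maxA0 B'); last by split => //; right.
  split => // sub; apply: nb; apply: sub; exists 0, id; split => //.
  - exact: JA0 (J0 act p).
  - by apply/funext => z; change (b z = 0 + b z); rewrite add0r.
have Hbm : is_Bmodule act bact.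
  split.
  - move=> b Hb k v w; have [x [Hx ->]] := qsurj v; have [y [Hy ->]] := qsurj w.
    rewrite -pi_lin // !bact_pi //; last exact: (End_lc HG).
    by rewrite -pi_lin //; exact: End_comp.
  - move=> b1 b2 Hb1 Hb2 k v; have [x [Hx ->]] := qsurj v.
    rewrite !bact_pi //; last exact: (End_lc HG).
    rewrite -pi_lin; try exact: End_comp.
    by congr (qpi HQ); apply/funext => z; rewrite (End_lin Hx).
  - move=> b1 b2 Hb1 Hb2 v; have [x [Hx ->]] := qsurj v.
    by rewrite !bact_pi //; try exact: End_comp.
  - by move=> v; have [x [Hx ->]] := qsurj v; rewrite bact_pi.
have Hirr : Birreducible act bact.
  split.
    by exists (qpi HQ id) => /(pi_eq0 HQ Eid).
  move=> S' [S0 Sl Sb] [v0 [Sv0 v0nz]] w.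
  have [b [Hb Eb]] := qsurj v0; subst v0.
  have nb : ~ A0 b by move=> Ab; apply: v0nz; apply/(pi_eq0 HQ Hb).
  have [a [c [Aa Hc E]]] := maxl b Hb nb.
  have Sid : S' (qpi HQ id).
    have -> : qpi HQ id = bact c (qpi HQ b).
      rewrite bact_pi //; apply/(pi_eq HQ Eid (End_comp Hc Hb)).
      by rewrite E addrK.
    exact: Sb.
  have [x [Hx ->]] := qsurj w.
  have -> : qpi HQ x = bact x (qpi HQ id) by rewrite bact_pi.
  exact: Sb.
case: Hp => _ _ Hgen.
have [phi [phil phib phis]] := Hgen (Q HQ) bact Hbm Hirr.
have bp0 w : bact p w = 0.
  have [x [Hx ->]] := qsurj w; rewrite bact_pi //.
  apply/(pi_eq0 HQ (End_comp pE Hx)); apply: JA0; exact: Jp.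
have inBp_p : in_Bp act p p by exists id; split => //; exact: Eid.
have phip : phi p = 0.
  have := phib p p inBp_p pE; rewrite bp0.
  by have -> : (fun z => p (p z)) = p by apply/funext => z; rewrite pp.
have phi0 x : in_Bp act p x -> phi x = 0.
  move=> [b0 [Hb0 Ex]]; have -> : x = fun z => p (b0 z) by apply/funext => z; rewrite Ex.
  rewrite phib // phip; case: Hbm => h1 _ _ _; exact: (lin0 (h1 b0 Hb0)).
have [x [Bx Ex]] := phis (qpi HQ id).
rewrite phi0 // in Ex; apply: A0id; apply/(pi_eq0 HQ Eid); by rewrite -Ex.
Qed.

End Key.


Section Bfacts.
Variables (A : lmodType CC) (mul : A -> A -> A) (G : lmodType CC)
  (act : A -> G -> G) (HG : is_lmodule mul act) (n : nat).
Local Notation P := {ffun 'I_n -> G}.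
Local Notation F := (P -> P).
Local Notation End := (is_End act (n := n)).
Variables (V : lmodType CC) (bact : F -> V -> V) (Hbm : is_Bmodule act bact).

Lemma bact0 v : bact (fun _ => 0) v = 0.
Proof.
case: Hbm => _ h2 _ _.
have := h2 (fun _ => 0) (fun _ => 0) (End0 HG n) (End0 HG n) 1 v.
have -> : (fun x : P => 1 *: (0 : P) + 0) = (fun _ => 0).
  by apply/funext => x; rewrite scale1r addr0.
rewrite scale1r; move/(congr1 (fun z => z - bact (fun _ => 0) v)).
by rewrite subrr addrK => ->.
Qed.

Lemma bact_sum I (r : seq I) (B : I -> F) v : (forall i, End (B i)) ->
  bact (fun x => \sum_(i <- r) B i x) v = \sum_(i <- r) bact (B i) v.
Proof.
move=> HB; elim: r => [|i r IH].
  rewrite big_nil -(bact0 v); congr bact; apply/funext => x; exact: big_nil.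
have Er : End (fun x => \sum_(j <- r) B j x).
  rewrite -fct_sumE; apply: (ss_sum (End_sub HG n)) => j _; exact: HB.
case: Hbm => _ h2 _ _.
rewrite big_cons -IH -[bact (B i) v]scale1r -h2 //.
by congr bact; apply/funext => x; rewrite big_cons scale1r.
Qed.
End Bfacts.

Theorem corollary7p12
  (A : lmodType CC) (mul : A -> A -> A)
  (HA : is_nualg mul) (HAUF : is_AUF mul)
  (G : lmodType CC) (actG : A -> G -> G)
  (HG : is_lmodule mul actG) (HGpg : proj_generator mul actG)
  (M : lmodType CC) (actM : A -> M -> M) (HM : is_lmodule mul actM) :
  proj_generator mul actM <->
  exists (n : nat) (p : {ffun 'I_n -> G} -> {ffun 'I_n -> G}),
    [/\ (0 < n)%N, generating_idempotent actG p &
        (* M is isomorphic to G^{+n} . p = { p xi : xi in G^{+n} } *)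
        exists psi : M -> {ffun 'I_n -> G},
          [/\ is_modmap actM (dsum_act actG n) psi,
              injective psi &
              forall y, (exists m, psi m = y) <-> (exists xi, y = p xi)]].
Proof.
case: HGpg => [[QG FG] PG genG].
split.
- move=> [[QM FM] PM genM].
  have [m0 [f0 [Hf0 f0s]]] := genG M actM HM (conj QM FM).
  pose res (x : {ffun 'I_m0.+1 -> G}) : {ffun 'I_m0 -> G} := [ffun i => x (lift ord_max i)].
  have Hres : is_modmap (dsum_act actG m0.+1) (dsum_act actG m0) res.
    by split => [k x y|a x]; apply/ffunP => i; rewrite !ffunE.
  have resonto : onto res.
    move=> x; exists [ffun i => oapp x 0 (unlift ord_max i)].
    by apply/ffunP => i; rewrite !ffunE liftK.
  pose f x := f0 (res x).
  have Hf : is_modmap (dsum_act actG m0.+1) actM f := mm_comp Hres Hf0.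
  have fonto : onto f := onto_comp resonto f0s.
  have [s [Hs fs]] := PM _ _ _ _ (dsum_lmod HG m0.+1) HM f Hf fonto id (mm_id actM).
  have [k [g [Hg gonto]]] := genM G actG HG (conj QG FG).
  have [t [Ht gt]] := PG _ _ _ _ (dsum_lmod HM k) HG g Hg gonto id (mm_id actG).
  pose p x := s (f x).
  have pE : is_End actG p := mm_comp Hf Hs.
  exists m0.+1, p; split => //; last first.
    exists s; split => //.
      by move=> x y /(congr1 f); rewrite !fs.
    move=> y; split => [[m1 <-]|[xi ->]]; first by exists (s m1); rewrite /p fs.
    by exists (f xi).
  split => //; first by move=> x; rewrite /p fs.
  move=> V bact Hbm [[v0 v0nz] irr].
  have [h1 h2 h3 h4] := Hbm.
  have Bp_End x : in_Bp actG p x -> is_End actG x.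
    move=> [b [Hb Ex]]; have -> : x = fun z => p (b z) by apply/funext => z; rewrite Ex.
    exact: End_comp Hb pE.
  have [[v Hv]|nv] := pselect (exists v, bact p v <> 0); last first.
    exfalso; apply: v0nz.
    pose Xf (ij : 'I_m0.+1 * 'I_k) := fun z => dinj ij.1 (g (dinj ij.2 (f z))).
    pose Yf (ij : 'I_m0.+1 * 'I_k) := fun z : {ffun 'I_m0.+1 -> G} => s (t (z ij.1) ij.2).
    have HX ij : is_End actG (Xf ij).
      exact: (mm_comp Hf (mm_comp (dinj_mm HM ij.2) (mm_comp Hg (dinj_mm HG ij.1)))).
    have HY ij : is_End actG (Yf ij).
      exact: (mm_comp (proj_mm actG ij.1) (mm_comp Ht (mm_comp (proj_mm actM ij.2) Hs))).
    have fps w : f (p (s w)) = w by rewrite /p !fs.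
    have decomp : id = fun x => \sum_(ij : 'I_m0.+1 * 'I_k) Xf ij (p (Yf ij x)).
      apply/funext => x /=.
      rewrite -(pair_big xpredT xpredT (fun i j => Xf (i, j) (p (Yf (i, j) x)))) /=.
      rewrite -{1}(sum_dinj x); apply: eq_bigr => i _.
      rewrite -(lin_sum (mm_lin (dinj_mm HG i))); congr dinj.
      rewrite -{1}(gt (x i)) -{1}(sum_dinj (t (x i))) (lin_sum (mm_lin Hg)).
      by apply: eq_bigr => j _; rewrite /Yf /= fps.
    rewrite -(h4 v0) decomp (bact_sum HG Hbm) //; last first.
      by move=> ij; apply: End_comp (HY ij) (End_comp pE (HX ij)).
    apply: big1 => ij _.
    have E1 := h3 (Yf ij) (fun w => Xf ij (p w)) (HY ij) (End_comp pE (HX ij)) v0.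
    rewrite /= in E1; rewrite E1 h3 //.
    have -> : bact p (bact (Xf ij) v0) = 0.
      by apply: contra_notP nv => nz; exists (bact (Xf ij) v0).
    exact: (lin0 (h1 _ (HY ij))).
  exists (fun x => bact x v); split.
  - move=> x y c Bx By; exact: h2 (Bp_End x Bx) (Bp_End y By) c v.
  - move=> x b Bx Hb; exact: h3 Hb (Bp_End x Bx) v.
  - pose S' w := exists x, in_Bp actG p x /\ bact x v = w.
    suff : forall w, S' w by move=> H w; have [x [? ?]] := H w; exists x.
    apply: irr; last by exists (bact p v); split => //; exists p; split => //; exists id.
    split.
    + exists 0; split; last exact: (bact0 HG Hbm v).
      exists 0; split; [exact: (End0 HG (m0.+1))| by move=> y; rewrite (lin0 (mm_lin pE))].
    + move=> c w1 w2 [x1 [[b1 [Hb1 E1]] <-]] [x2 [[b2 [Hb2 E2]] <-]].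
      exists (fun z => c *: x1 z + x2 z); split.
        exists (c *: b1 + b2); split; first exact: (@End_lc _ mul _ actG HG _ c b1 b2 Hb1 Hb2).
        by move=> y; rewrite E1 E2; case: pE => ->.
      have Bx1 : in_Bp actG p x1 by exists b1.
      have Bx2 : in_Bp actG p x2 by exists b2.
      exact: (h2 x1 x2 (Bp_End x1 Bx1) (Bp_End x2 Bx2) c v).
    + move=> b w Hb [x [[b0 [Hb0 E0]] <-]]; exists (fun z => x (b z)); split.
        by exists (fun z => b0 (b z)); split; [exact: End_comp Hb Hb0| move=> y; rewrite E0].
      have Bx : in_Bp actG p x by exists b0.
      exact (h3 b x Hb (Bp_End x Bx) v).
- move=> [n [p [n0 Hp [psi [Hpsi psii Him]]]]].
  have [pE pp _] := Hp.
  have [r Hr] := choice (fun xi => proj2 (Him (p xi)) (ex_intro _ xi erefl)).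
  have Hrm : is_modmap (dsum_act actG n) actM r.
    split.
    + move=> k x y; apply: psii; rewrite Hr.
      have [h1 _] := Hpsi; rewrite h1 !Hr; by case: pE => ->.
    + move=> a x; apply: psii; rewrite Hr.
      have [_ h2] := Hpsi; rewrite h2 Hr; by case: pE => _ ->.
  have rpsi m : r (psi m) = m.
    apply: psii; rewrite Hr; have [xi ->] := proj1 (Him (psi m)) (ex_intro _ m erefl).
    by rewrite pp.
  have ronto : onto r by move=> m; exists (psi m).
  split; first split.
  + exact: quasi_image (quasi_pow HA HAUF (n := n) HG QG) Hrm ronto.
  + exact: fin_gen_image (fin_gen_pow HG n FG) Hrm ronto.
  + exact: proj_retract (proj_pow HG (n := n) PG) Hpsi Hrm rpsi.
  + move=> N actN HN CN.
    have [m0 [f0 [Hf0 f0s]]] := genG N actN HN CN.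
    have [k [X [Y [HXY E]]]] := key HG Hp.
    pose h (u : {ffun 'I_k -> M}) : {ffun 'I_n -> G} := \sum_j X j (psi (u j)).
    have Hh : is_modmap (dsum_act actM k) (dsum_act actG n) h.
      split.
      * move=> c u v; rewrite /h scaler_sumr -big_split /=; apply: eq_bigr => j _.
        case: (HXY j) => [[x1 _] _]; have [h1 _] := Hpsi.
        by rewrite !ffunE h1 x1.
      * move=> a u; rewrite /h (lin_sum (act_lin a (dsum_lmod HG n))).
        apply: eq_bigr => j _; rewrite ffunE; case: (HXY j) => [[_ x2] _].
        by have [_ h2] := Hpsi; rewrite h2 x2.
    have honto : onto h.
      move=> x; exists [ffun j => r (Y j x)].
      have Ex : x = \sum_(j < k) X j (p (Y j x)) by exact: (congr1 (fun f => f x) E).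
      rewrite [RHS]Ex /h; apply: eq_bigr => j _; by rewrite ffunE Hr.
    pose i0 : 'I_n := Ordinal n0.
    pose g0 u := h u i0.
    have Hg0 : is_modmap (dsum_act actM k) actG g0 := mm_comp Hh (proj_mm actG i0).
    have g0onto : onto g0.
      move=> y; have [u Hu] := honto (dinj i0 y); exists u.
      by rewrite /g0 Hu ffunE eqxx.
    have [c [h2 [Hh2 h2s]]] := quot_pow Hg0 g0onto m0.
    exists c, (fun u => f0 (h2 u)); split; [exact: mm_comp Hh2 Hf0| exact: onto_comp].
Qed.
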